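(* If $\mathsf{A}^{i+1}=\{0\}$, then $[\varpi]^i\colon\mathsf{B}^i\to\mathsf{A}^i$ is surjective.
   Context: Let $A$ be the graded commutative algebra of functions of a graded manifold with a flat $P_\infty$-structure $\lambda_i$, $\mathrm{d}:=\lambda_1$, $\mathsf{A}=H_{\mathrm{d}}(A)$. Given a flat $A_\infty$ deformation quantization $\mu_i$ on $A[[\epsilon]]$, set $\tau_i=\epsilon^{i-2}\mu_i$, $\delta:=\tau_1=\sum_{n\ge0}\epsilon^n\mathrm{d}_n$ with $\mathrm{d}_0=\mathrm{d}$, and $\mathsf{B}$ the $\delta$-cohomology of $A[[\epsilon]]$. Let $\varpi\colon A[[\epsilon]]\to A$, $\sum\epsilon^n a_n\mapsto a_0$, a chain map $(A[[\epsilon]],\delta)\to(A,\mathrm{d})$, and $[\varpi]^i\colon\mathsf{B}^i\to\mathsf{A}^i$ the induced map in degree $i$. *)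

(* Defs.v *)
From HB Require Import structures.
From mathcomp Require Import all_boot all_order all_algebra.
Set Implicit Arguments. Unset Strict Implicit. Unset Printing Implicit Defensive.
Import GRing.Theory.
Local Open Scope ring_scope.

(* A : the graded K-module underlying the algebra of functions, A i = A^i.
   The sequence d n : A^i -> A^(i+1) (n : nat) are the coefficients of
   delta = tau_1 = sum_n eps^n d_n, with d 0 = d. *)

Definition Grade (K : fieldType) := int -> lmodType K.

Definition Coeffs (K : fieldType) (A : Grade K) :=
  nat -> forall i : int, {linear A i -> A (i + 1)}.

(* degree-i part of A[[eps]] : formal power series sum_n eps^n a_n, a_n in A^i *)
Definition series (K : fieldType) (A : Grade K) (i : int) := nat -> A i.

Definition delta (K : fieldType) (A : Grade K) (dd : Coeffs A) (i : int)
  (a : series A i) : series A (i + 1) :=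
  fun n => \sum_(k < n.+1) dd k i (a (n - k)%N).

Definition delta_sq_zero (K : fieldType) (A : Grade K) (dd : Coeffs A) :=
  forall (i : int) (a : series A i), delta dd (delta dd a) = (fun _ => 0).

Definition varpi (K : fieldType) (A : Grade K) (i : int) (a : series A i) : A i :=
  a 0%N.

Definition d_exact (K : fieldType) (A : Grade K) (dd : Coeffs A) (i : int)
  (x : A i) : Prop :=
  exists (j : int) (c : A j) (e : j + 1 = i), x = ecast k (A k) e (dd 0%N j c).

Definition cohom_A_vanishes_succ (K : fieldType) (A : Grade K) (dd : Coeffs A)
  (i : int) : Prop :=
  forall x : A (i + 1), dd 0%N (i + 1) x = 0 -> exists y : A i, dd 0%N i y = x.

(* [varpi]^i : B^i -> A^i is surjective: every class [a] in H^i_d(A)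
   is [varpi b] for some delta-cocycle b of degree i *)
Definition varpi_cohom_surjective (K : fieldType) (A : Grade K) (dd : Coeffs A)
  (i : int) : Prop :=
  forall a : A i, dd 0%N i a = 0 ->
    exists b : series A i,
      delta dd b = (fun _ => 0) /\ d_exact dd (varpi b - a).

(* Main.v *)
Require Import Defs.
From mathcomp Require Import all_boot all_order all_algebra.
From Stdlib Require Import ClassicalEpsilon FunctionalExtensionality.
From mathcomp Require Import zify.
Set Implicit Arguments. Unset Strict Implicit. Unset Printing Implicit Defensive.
Import GRing.Theory.
Local Open Scope ring_scope.

Section S.
Variables (K : fieldType) (A : Grade K) (dd : Coeffs A) (i : int) (a : A i).

Lemma delta_local (f g : series A i) m :
  (forall j, (j <= m)%N -> f j = g j) -> delta dd f m = delta dd g m.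
Proof.
move=> H; rewrite /delta; apply: eq_bigr => k _; rewrite H //; exact: leq_subr.
Qed.

Definition pick (f : series A i) (n : nat) : A i :=
  epsilon (inhabits 0) (fun y : A i => dd 0%N i y = delta dd f n).

Fixpoint build (n : nat) : series A i :=
  match n with
  | 0%N => fun m => if m == 0%N then a else 0
  | n'.+1 => fun m => if m == n'.+1 then - pick (build n') n'.+1 else build n' m
  end.

Lemma build_high n m : (n < m)%N -> build n m = 0.
Proof.
elim: n m => [|n IH] m /= Hm.
  by case: eqP Hm => // ->.
case: eqP Hm => [->|_ Hm]; first by rewrite ltnn.
by apply: IH; apply: ltnW.
Qed.

Lemma build_mono n n' m : (m <= n)%N -> (n <= n')%N -> build n' m = build n m.
Proof.
move=> Hm; elim: n' => [|n' IH] Hn.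
  by move: Hn; rewrite leqn0 => /eqP ->.
case: (ltngtP n n'.+1) Hn => // [Hlt|<-] _ //=.
case: eqP => [E|_]; first by move: Hm Hlt; rewrite E => Hm Hlt; lia.
by apply: IH.
Qed.

Hypothesis Hsq : delta_sq_zero dd.
Hypothesis Hv : cohom_A_vanishes_succ dd i.
Hypothesis Ha : dd 0%N i a = 0.

Lemma closed_obs (f : series A i) n :
  (forall m, (m < n.+1)%N -> delta dd f m = 0) ->
  dd 0%N (i + 1) (delta dd f n.+1) = 0.
Proof.
move=> H.
have := congr1 (fun h => h n.+1) (Hsq f) => /=.
rewrite {1}/delta big_ord_recl /= subn0.
rewrite big1 ?addr0 // => k _.
rewrite /bump /= add1n subSS H ?linear0 //.
rewrite ltnS; exact: leq_subr.
Qed.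

Lemma build_delta n m : (m <= n)%N -> delta dd (build n) m = 0.
Proof.
elim: n m => [|n IH] m Hm.
  move: Hm; rewrite leqn0 => /eqP ->.
  by rewrite /delta big_ord1 /= Ha.
case: (ltngtP m n.+1) Hm => // [Hlt|->] _.
  rewrite (@delta_local _ (build n)) ?IH //.
  move=> j Hj /=; case: eqP => // E; move: Hj Hlt; rewrite E; lia.
set f := build n.
have Hc : dd 0%N (i + 1) (delta dd f n.+1) = 0.
  by apply: closed_obs => m0 Hm0; apply: IH.
have [y Hy] := Hv Hc.
have Hp : dd 0%N i (pick f n.+1) = delta dd f n.+1.
  rewrite /pick; apply: (epsilon_spec (inhabits 0) (fun y : A i => dd 0%N i y = delta dd f n.+1)).
  by exists y.
have E : delta dd f n.+1 = dd 0%N i (f n.+1) +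
    \sum_(k < n.+1) dd (bump 0 k) i (f (n.+1 - bump 0 k)%N).
  by rewrite /delta big_ord_recl subn0.
rewrite /delta big_ord_recl subn0 /= eqxx linearN Hp E /f build_high // linear0 add0r.
set S1 := \sum_(k < n.+1) _.
set S2 := \sum_(k < n.+1) _.
suff -> : S2 = S1 by rewrite addNr.
apply: eq_bigr => k _; congr (dd _ i _).
rewrite /bump /= add1n subSS; case: eqP => // E2.
by move: (leq_subr k n) E2 => H1 H2; lia.
Qed.

End S.

Lemma ecast0 (K : fieldType) (A : Grade K) (i m : int) (e : m = i) :
  ecast k (A k) e 0 = 0.
Proof. by subst. Qed.

Theorem lemma7p14 (K : fieldType) (A : Grade K) (dd : Coeffs A) (i : int) :
  delta_sq_zero dd ->
  cohom_A_vanishes_succ dd i ->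
  varpi_cohom_surjective dd i.
Proof.
move=> Hsq Hv a Ha.
exists (fun m => build dd a m m); split.
  apply: functional_extensionality => n.
  rewrite (@delta_local _ _ _ _ _ (build dd a n)).
    exact: build_delta.
  by move=> j Hj; rewrite (build_mono dd a (leqnn j) Hj).
rewrite /varpi /= subrr.
exists (i - 1), 0, (subrK 1 i).
by rewrite linear0 ecast0.
Qed.
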